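(* Let $\Sigma$ be a language consisting only of $0$-ary predicate symbols, and let $\mathcal{T}_\Sigma$ be the family of all complete theories in $\Sigma$. If $\Sigma$ consists of $n\in\omega$ symbols, then ${\rm RS}(\mathcal{T}_\Sigma)=1$ and ${\rm ds}(\mathcal{T}_\Sigma)=2^n$. If $\Sigma$ has infinitely many symbols, then ${\rm RS}(\mathcal{T}_\Sigma)=\infty$.
   Context: Theories are complete consistent first-order theories; structures have nonempty universes. For a family $\mathcal{T}$ of theories and a sentence $\varphi$ of its language, $\mathcal{T}_\varphi=\{T\in\mathcal{T}\mid\varphi\in T\}$. The rank ${\rm RS}$ of a family is defined as follows: ${\rm RS}(\emptyset)=-1$; ${\rm RS}(\mathcal{T})=0$ for finite nonempty $\mathcal{T}$; ${\rm RS}(\mathcal{T})\ge 1$ for infinite $\mathcal{T}$; for $\alpha=\beta+1$, ${\rm RS}(\mathcal{T})\ge\alpha$ iff there are pairwise inconsistent sentences $\varphi_n$, $n\in\omega$, of the language of $\mathcal{T}$ with ${\rm RS}(\mathcal{T}_{\varphi_n})\ge\beta$ for all $n$; for limit $\alpha$, ${\rm RS}(\mathcal{T})\ge\alpha$ iff ${\rm RS}(\mathcal{T})\ge\beta$ for all $\beta<\alpha$; ${\rm RS}(\mathcal{T})=\alpha$ iff ${\rm RS}(\mathcal{T})\ge\alpha$ and not ${\rm RS}(\mathcal{T})\ge\alpha+1$; ${\rm RS}(\mathcal{T})=\infty$ if ${\rm RS}(\mathcal{T})\ge\alpha$ for every ordinal $\alpha$. If ${\rm RS}(\mathcal{T})=\alpha$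 is an ordinal $\ge0$, the degree ${\rm ds}(\mathcal{T})$ is the maximal number of pairwise inconsistent sentences $\varphi_i$ with ${\rm RS}(\mathcal{T}_{\varphi_i})=\alpha$. *)

(* Defs.v *)
From Stdlib Require Import Arith List.
Set Implicit Arguments.

Inductive form (I : Type) : Type :=
| FFalse : form I
| FPred  : I -> form I
| FEq    : nat -> nat -> form I
| FNot   : form I -> form I
| FImp   : form I -> form I -> form I
| FAnd   : form I -> form I -> form I
| FOr    : form I -> form I -> form I
| FAll   : nat -> form I -> form I
| FEx    : nat -> form I -> form I.
Arguments FFalse {I}.
Arguments FPred {I}.
Arguments FEq {I}.
Arguments FNot {I}.
Arguments FImp {I}.
Arguments FAnd {I}.
Arguments FOr {I}.
Arguments FAll {I}.
Arguments FEx {I}.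

Fixpoint free {I : Type} (p : form I) (x : nat) : Prop :=
  match p with
  | FFalse => False
  | FPred _ => False
  | FEq y z => x = y \/ x = z
  | FNot q => free q x
  | FImp q r | FAnd q r | FOr q r => free q x \/ free r x
  | FAll y q | FEx y q => x <> y /\ free q x
  end.

Definition closed {I : Type} (p : form I) : Prop := forall x, ~ free p x.

Record structure (I : Type) := {
  carrier : Type;
  point : carrier;                (* the universe is nonempty *)
  interp : I -> Prop
}.

Definition upd {M : Type} (e : nat -> M) (x : nat) (d : M) : nat -> M :=
  fun y => if Nat.eqb y x then d else e y.

Fixpoint sat {I : Type} (S : structure I) (e : nat -> carrier S) (p : form I) : Prop :=
  match p with
  | FFalse => False
  | FPred i => interp S i
  | FEq x y => e x = e y
  | FNot q => ~ sat S e q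
  | FImp q r => sat S e q -> sat S e r
  | FAnd q r => sat S e q /\ sat S e r
  | FOr q r => sat S e q \/ sat S e r
  | FAll x q => forall d : carrier S, sat S (upd e x d) q
  | FEx x q => exists d : carrier S, sat S (upd e x d) q
  end.

Definition theory (I : Type) := form I -> Prop.

Definition Th {I : Type} (S : structure I) : theory I :=
  fun p => closed p /\ forall e : nat -> carrier S, sat S e p.

Definition family (I : Type) := theory I -> Prop.

(* T_Sigma: the family of all complete (consistent) theories in Sigma,
   i.e. all theories of structures. *)
Definition T_Sigma (I : Type) : family I := fun T => exists S : structure I, T = Th S.
Arguments T_Sigma I : clear implicits.

Definition subfamily {I : Type} (F : family I) (p : form I) : family I :=
  fun T => F T /\ T p.

Definition family_finite {I : Type} (F : family I) : Prop :=
  exists L : list (theory I), forall T, F T ->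
    exists T', In T' L /\ forall p, T p <-> T' p.
Definition family_infinite {I : Type} (F : family I) : Prop := ~ family_finite F.

Definition inconsistent {I : Type} (p q : form I) : Prop :=
  forall (S : structure I) (e : nat -> carrier S), ~ (sat S e p /\ sat S e q).

Definition pw_inconsistent {I : Type} (phi : nat -> form I) : Prop :=
  (forall n, closed (phi n)) /\
  (forall n m, n <> m -> inconsistent (phi n) (phi m)).

Definition pw_inconsistent_fin {I : Type} (k : nat) (phi : nat -> form I) : Prop :=
  (forall i, i < k -> closed (phi i)) /\
  (forall i j, i < k -> j < k -> i <> j -> inconsistent (phi i) (phi j)).

(* ---------- Ordinals (Brouwer trees with limits indexed by arbitrary
   nonempty types) ---------- *)
Inductive Ord : Type :=
| OZ : Ord
| OS : Ord -> Ord
| OL : forall (A : Type), A -> (A -> Ord) -> Ord.   (* supremum of f over nonempty A *)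

Definition Oone : Ord := OS OZ.

Fixpoint RS_ge {I : Type} (a : Ord) (F : family I) : Prop :=
  match a with
  | OZ => exists T, F T                         (* RS(emptyset) = -1 *)
  | OS OZ => family_infinite F
  | OS b => exists phi : nat -> form I,
              pw_inconsistent phi /\ forall n, RS_ge b (subfamily F (phi n))
  | @OL A _ f => forall x : A, RS_ge (f x) F
  end.

Definition RS_eq {I : Type} (F : family I) (a : Ord) : Prop :=
  RS_ge a F /\ ~ RS_ge (OS a) F.

Definition RS_infty {I : Type} (F : family I) : Prop := forall a : Ord, RS_ge a F.

Definition ds_eq {I : Type} (F : family I) (a : Ord) (d : nat) : Prop :=
  (exists phi : nat -> form I, pw_inconsistent_fin d phi /\
     forall i, i < d -> RS_eq (subfamily F (phi i)) a) /\
  (forall (k : nat) (phi : nat -> form I), pw_inconsistent_fin k phi ->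
     (forall i, i < k -> RS_eq (subfamily F (phi i)) a) -> k <= d).

Definition has_card (I : Type) (n : nat) : Prop :=
  exists (f : I -> nat) (g : nat -> I),
    (forall i, f i < n) /\ (forall i, g (f i) = i) /\ (forall k, k < n -> f (g k) = k).

Definition type_finite (I : Type) : Prop := exists L : list I, forall i, In i L.

(* Main.v *)
Require Import Defs.
From Stdlib Require Import Arith List.
From Stdlib Require Import Lia Classical ClassicalEpsilon Eqdep_dec.
Import ListNotations.
Set Implicit Arguments.
Fixpoint vars {I : Type} (p : form I) : list nat :=
  match p with
  | FFalse => [] | FPred _ => []
  | FEq x y => [x; y]
  | FNot q => vars q
  | FImp q r | FAnd q r | FOr q r => vars q ++ vars r
  | FAll x q | FEx x q => x :: vars q
  end.

Definition agree {M N : Type} (e : nat -> M) (e' : nat -> N) (L : list nat) :=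
  forall x y, In x L -> In y L -> (e x = e y <-> e' x = e' y).

Definition large (M : Type) (k : nat) :=
  forall l : list M, length l < k -> exists d, ~ In d l.

Lemma upd_eq {M : Type} (e : nat -> M) x d : upd e x d x = d.
Proof. unfold upd; rewrite Nat.eqb_refl; auto. Qed.
Lemma upd_neq {M : Type} (e : nat -> M) x d y : y <> x -> upd e x d y = e y.
Proof. intro H; unfold upd; apply Nat.eqb_neq in H; rewrite H; auto. Qed.
Lemma upd_same {M : Type} (e : nat -> M) x y : upd e x (e x) y = e y.
Proof. unfold upd; destruct (Nat.eqb_spec y x); subst; auto. Qed.

Lemma agree_sym {M N : Type} (e : nat -> M) (e' : nat -> N) L :
  agree e e' L -> agree e' e L.
Proof. intros H x y Hx Hy; specialize (H x y Hx Hy); tauto. Qed.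
Lemma agree_sub {M N : Type} (e : nat -> M) (e' : nat -> N) L L' :
  agree e e' L -> incl L' L -> agree e e' L'.
Proof. intros H Hi x y Hx Hy; apply H; auto. Qed.
Lemma agree_ext {M N : Type} (e1 e2 : nat -> M) (e' : nat -> N) L :
  (forall x, e1 x = e2 x) -> agree e1 e' L -> agree e2 e' L.
Proof. intros He H x y Hx Hy; rewrite <- !He; apply H; auto. Qed.
Lemma large_mono M k k' : large M k -> k' <= k -> large M k'.
Proof. intros H Hk l Hl; apply H; lia. Qed.

Lemma ext_lem {M N : Type} (e : nat -> M) (e' : nat -> N) L x (d : M) :
  agree e e' L -> large N (S (length L)) ->
  exists d', agree (upd e x d) (upd e' x d') (x :: L).
Proof.
  intros Hag Hl.
  destruct (classic (exists y, In y L /\ y <> x /\ e y = d)) as [[y [Hy [Hyx Hd]]] | Hno].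
  - exists (e' y). intros a b Ha Hb.
    destruct (Nat.eq_dec a x) as [-> | Hax]; destruct (Nat.eq_dec b x) as [-> | Hbx].
    + rewrite !upd_eq; tauto.
    + rewrite !upd_eq, !upd_neq by auto. destruct Hb as [Hb|Hb]; [congruence|].
      subst d. apply Hag; auto.
    + rewrite !upd_eq, !upd_neq by auto. destruct Ha as [Ha|Ha]; [congruence|].
      subst d. apply Hag; auto.
    + rewrite !upd_neq by auto. destruct Ha as [Ha|Ha]; [congruence|].
      destruct Hb as [Hb|Hb]; [congruence|]. apply Hag; auto.
  - destruct (Hl (map e' L)) as [d' Hd']. { rewrite length_map; lia. }
    exists d'. intros a b Ha Hb.
    destruct (Nat.eq_dec a x) as [-> | Hax]; destruct (Nat.eq_dec b x) as [-> | Hbx].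
    + rewrite !upd_eq; tauto.
    + rewrite !upd_eq, !upd_neq by auto. destruct Hb as [Hb|Hb]; [congruence|].
      split; intro E; exfalso.
      * apply Hno; exists b; auto.
      * apply Hd'; rewrite E; apply in_map; auto.
    + rewrite !upd_eq, !upd_neq by auto. destruct Ha as [Ha|Ha]; [congruence|].
      split; intro E; exfalso.
      * apply Hno; exists a; auto.
      * apply Hd'; rewrite <- E; apply in_map; auto.
    + rewrite !upd_neq by auto. destruct Ha as [Ha|Ha]; [congruence|].
      destruct Hb as [Hb|Hb]; [congruence|]. apply Hag; auto.
Qed.

Lemma EF {I : Type} (p : form I) : forall (M N : structure I),
  (forall i, interp M i <-> interp N i) ->
  large (carrier M) (length (vars p)) -> large (carrier N) (length (vars p)) ->
  forall e e', agree e e' (vars p) -> (sat M e p <-> sat N e' p).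
Proof.
  induction p; intros M N Hi HM HN e e' Hag; simpl in *.
  - tauto.
  - apply Hi.
  - exact (Hag _ _ (or_introl eq_refl) (or_intror (or_introl eq_refl))).
  - rewrite (IHp M N Hi HM HN e e' Hag); tauto.
  - rewrite length_app in HM, HN.
    rewrite (IHp1 M N Hi (large_mono HM (Nat.le_add_r _ _)) (large_mono HN (Nat.le_add_r _ _)) e e'
      (agree_sub Hag (incl_appl _ (incl_refl _)))).
    rewrite (IHp2 M N Hi (large_mono HM (Nat.le_add_l _ _)) (large_mono HN (Nat.le_add_l _ _)) e e'
      (agree_sub Hag (incl_appr _ (incl_refl _)))). tauto.
  - rewrite length_app in HM, HN.
    rewrite (IHp1 M N Hi (large_mono HM (Nat.le_add_r _ _)) (large_mono HN (Nat.le_add_r _ _)) e e'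
      (agree_sub Hag (incl_appl _ (incl_refl _)))).
    rewrite (IHp2 M N Hi (large_mono HM (Nat.le_add_l _ _)) (large_mono HN (Nat.le_add_l _ _)) e e'
      (agree_sub Hag (incl_appr _ (incl_refl _)))). tauto.
  - rewrite length_app in HM, HN.
    rewrite (IHp1 M N Hi (large_mono HM (Nat.le_add_r _ _)) (large_mono HN (Nat.le_add_r _ _)) e e'
      (agree_sub Hag (incl_appl _ (incl_refl _)))).
    rewrite (IHp2 M N Hi (large_mono HM (Nat.le_add_l _ _)) (large_mono HN (Nat.le_add_l _ _)) e e'
      (agree_sub Hag (incl_appr _ (incl_refl _)))). tauto.
  - assert (HM' := large_mono HM (le_S _ _ (le_n _))).
    assert (HN' := large_mono HN (le_S _ _ (le_n _))).
    split.
    + intros Hq d'.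
      destruct (@ext_lem _ _ e' e _ n d' (agree_sym (agree_sub Hag (incl_tl _ (incl_refl _)))) HM)
        as [d Hd].
      apply (IHp M N Hi HM' HN' (upd e n d) (upd e' n d')); auto.
      apply agree_sym; apply (agree_sub Hd); apply incl_tl, incl_refl.
    + intros Hq d.
      destruct (@ext_lem _ _ e e' _ n d (agree_sub Hag (incl_tl _ (incl_refl _))) HN) as [d' Hd].
      apply (IHp M N Hi HM' HN' (upd e n d) (upd e' n d')); auto.
      apply (agree_sub Hd); apply incl_tl, incl_refl.
  - assert (HM' := large_mono HM (le_S _ _ (le_n _))).
    assert (HN' := large_mono HN (le_S _ _ (le_n _))).
    split.
    + intros [d Hq].
      destruct (@ext_lem _ _ e e' _ n d (agree_sub Hag (incl_tl _ (incl_refl _))) HN) as [d' Hd].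
      exists d'.
      apply (IHp M N Hi HM' HN' (upd e n d) (upd e' n d')); auto.
      apply (agree_sub Hd); apply incl_tl, incl_refl.
    + intros [d' Hq].
      destruct (@ext_lem _ _ e' e _ n d' (agree_sym (agree_sub Hag (incl_tl _ (incl_refl _)))) HM)
        as [d Hd].
      exists d.
      apply (IHp M N Hi HM' HN' (upd e n d) (upd e' n d')); auto.
      apply agree_sym; apply (agree_sub Hd); apply incl_tl, incl_refl.
Qed.

Lemma build {M N : Type} (m0 : M) L : large M (length L) ->
  forall e' : nat -> N, exists e : nat -> M, agree e e' L.
Proof.
  induction L as [|x L IH]; intros Hl e'.
  - exists (fun _ => m0). intros x y [].
  - destruct (IH (large_mono Hl (le_S _ _ (le_n _))) e') as [e He].
    destruct (@ext_lem _ _ e' e _ x (e' x) (agree_sym He) Hl) as [d Hd].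
    exists (upd e x d). apply agree_sym. apply (agree_ext (e1 := upd e' x (e' x))); auto.
    intro; apply upd_same.
Qed.

Lemma transfer {I : Type} (M N : structure I) p :
  (forall i, interp M i <-> interp N i) ->
  large (carrier M) (length (vars p)) -> large (carrier N) (length (vars p)) ->
  (forall e, sat M e p) -> forall e', sat N e' p.
Proof.
  intros Hi HM HN H e'.
  destruct (build (point M) (vars p) HM e') as [e He].
  apply (EF p M N Hi HM HN He); auto.
Qed.
Unset Implicit Arguments.

Definition hasN (M : Type) (k : nat) := exists l : list M, length l = k /\ NoDup l.

Lemma hasN_large (M : Type) k : hasN M k -> large M k.
Proof.
  intros [m [Hm Hnd]] l Hl. apply NNPP; intro Hc.
  assert (Hi : incl m l).
  { intros d Hd; apply NNPP; intro Hn; apply Hc; exists d; auto. }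
  pose proof (NoDup_incl_length Hnd Hi). lia.
Qed.

Lemma cover (M : Type) K : ~ hasN M K ->
  exists l : list M, NoDup l /\ (forall x, In x l) /\ length l < K.
Proof.
  intro H.
  assert (G : forall d (l : list M), length l + d = K -> NoDup l ->
    exists l' : list M, NoDup l' /\ (forall x, In x l') /\ length l' < K).
  { induction d; intros l Hl Hnd.
    - exfalso; apply H; exists l; split; [lia|auto].
    - destruct (classic (forall x, In x l)) as [Hc|Hc].
      + exists l; repeat split; auto; lia.
      + apply not_all_ex_not in Hc as [x Hx].
        apply (IHd (x :: l)); simpl; [lia | constructor; auto]. }
  apply (G K nil); simpl; auto; constructor.
Qed.

Lemma iso {I : Type} (M N : structure I) (h : carrier M -> carrier N)
  (hi : carrier N -> carrier M) :
  (forall x, hi (h x) = x) -> (forall y, h (hi y) = y) ->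
  (forall i, interp M i <-> interp N i) ->
  forall p e e', (forall x, h (e x) = e' x) -> (sat M e p <-> sat N e' p).
Proof.
  intros H1 H2 Hi p. induction p; intros e e' He; simpl.
  - tauto.
  - apply Hi.
  - rewrite <- !He. split; intro E; [congruence|].
    rewrite <- (H1 (e n)), E, H1; auto.
  - rewrite (IHp e e' He); tauto.
  - rewrite (IHp1 e e' He), (IHp2 e e' He); tauto.
  - rewrite (IHp1 e e' He), (IHp2 e e' He); tauto.
  - rewrite (IHp1 e e' He), (IHp2 e e' He); tauto.
  - assert (U : forall a b, h a = b -> forall x, h (upd e n a x) = upd e' n b x).
    { intros a b Hab x; unfold upd; destruct (Nat.eqb x n); auto. }
    split; intros Hq d.
    + apply (proj1 (IHp (upd e n (hi d)) (upd e' n d) (U _ _ (H2 d)))). apply Hq.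
    + apply (proj2 (IHp (upd e n d) (upd e' n (h d)) (U _ _ eq_refl))). apply Hq.
  - assert (U : forall a b, h a = b -> forall x, h (upd e n a x) = upd e' n b x).
    { intros a b Hab x; unfold upd; destruct (Nat.eqb x n); auto. }
    split; intros [d Hq].
    + exists (h d). apply (proj1 (IHp (upd e n d) (upd e' n (h d)) (U _ _ eq_refl))). apply Hq.
    + exists (hi d). apply (proj2 (IHp (upd e n (hi d)) (upd e' n d) (U _ _ (H2 d)))). apply Hq.
Qed.

Lemma Th_iso {I : Type} (M N : structure I) (h : carrier M -> carrier N)
  (hi : carrier N -> carrier M) :
  (forall x, hi (h x) = x) -> (forall y, h (hi y) = y) ->
  (forall i, interp M i <-> interp N i) ->
  forall p, Th M p <-> Th N p.
Proof.
  intros H1 H2 Hi p; unfold Th; split; intros [Hc Hs]; split; auto; intro e.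
  - apply (iso M N h hi H1 H2 Hi p (fun x => hi (e x))); auto.
  - apply (iso M N h hi H1 H2 Hi p e (fun x => h (e x))); auto.
Qed.

Definition CS {I : Type} (s : nat) (v : I -> Prop) : structure I :=
  {| carrier := {m : nat | Nat.ltb m (S s) = true};
     point := exist _ 0 eq_refl; interp := v |}.

Lemma sig_eq k (a b : {m : nat | Nat.ltb m k = true}) : proj1_sig a = proj1_sig b -> a = b.
Proof.
  destruct a as [a pa], b as [b pb]; simpl; intros ->; f_equal.
  apply UIP_dec; exact Bool.bool_dec.
Qed.

Lemma CS_hasN {I : Type} s (v : I -> Prop) : hasN (carrier (CS s v)) (S s).
Proof.
  unfold hasN; simpl.
  assert (G : forall j, j <= S s -> exists l : list {m : nat | Nat.ltb m (S s) = true},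
     length l = j /\ NoDup l /\ forall c, In c l -> proj1_sig c < j).
  { induction j; intros Hj.
    - exists nil; simpl; repeat split; auto; [constructor | intros c []].
    - destruct (IHj ltac:(lia)) as [l [Hl [Hnd Hc]]].
      assert (Hjs : Nat.ltb j (S s) = true) by (apply Nat.ltb_lt; lia).
      exists (exist _ j Hjs :: l). simpl; repeat split.
      + lia.
      + constructor; auto. intro Hin; apply Hc in Hin; simpl in Hin; lia.
      + intros c [<- | Hin]; simpl; [lia|]. apply Hc in Hin; lia. }
  destruct (G (S s) (le_n _)) as [l [Hl [Hnd _]]]; eauto.
Qed.

Lemma NoDup_map_on {A B : Type} (f : A -> B) (l : list A) :
  (forall x y, In x l -> In y l -> f x = f y -> x = y) -> NoDup l -> NoDup (map f l).
Proof.
  induction l as [|a l IH]; intros Hinj Hnd; simpl; [constructor|].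
  inversion Hnd; subst. constructor.
  - intro Hin. apply in_map_iff in Hin as [y [Hy Hyl]].
    assert (y = a) by (apply Hinj; simpl; auto). subst; contradiction.
  - apply IH; auto. intros x y Hx Hy; apply Hinj; simpl; auto.
Qed.

Lemma CS_nohasN {I : Type} s (v : I -> Prop) (l : list (carrier (CS s v))) :
  NoDup l -> length l <= S s.
Proof.
  intros Hl.
  cut (length (map (@proj1_sig nat (fun m => Nat.ltb m (S s) = true)) l) <= S s).
  { rewrite length_map; auto. }
  rewrite <- (length_seq (S s) 0) at 1.
  apply NoDup_incl_length.
  - apply NoDup_map_on; auto. intros x y _ _; apply sig_eq.
  - intros m Hm; apply in_map_iff in Hm as [[m' pm] [<- _]]; change (In m' (seq 0 (S s))).
    apply (proj2 (in_seq _ _ _)). apply Nat.ltb_lt in pm; lia.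
Qed.

Fixpoint ND {I : Type} (t i : nat) : form I :=
  match i with 0 => FNot FFalse | S i' => FAnd (ND t i') (FNot (FEq i' t)) end.
Fixpoint AL {I : Type} (j m : nat) : form I :=
  match j with 0 => FNot FFalse | S j' => FEx m (FAnd (ND m m) (AL j' (S m))) end.

Lemma sat_ND {I : Type} (M : structure I) e t i :
  sat M e (ND t i) <-> forall k, k < i -> e k <> e t.
Proof.
  induction i; simpl.
  - split; intros; [lia | tauto].
  - rewrite IHi. split.
    + intros [H1 H2] k Hk. destruct (Nat.eq_dec k i); [subst; auto | apply H1; lia].
    + intros H; split; [intros; apply H; lia | apply H; lia].
Qed.

Lemma sat_AL {I : Type} (M : structure I) j : forall m e,
  sat M e (AL j m) <-> exists l : list (carrier M), length l = j /\ NoDup l /\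
    forall d, In d l -> forall i, i < m -> d <> e i.
Proof.
  induction j; intros m e; simpl.
  - split.
    + intros _. exists nil; split; [reflexivity|split; [constructor| intros d []]].
    + intros _ f; exact f.
  - split.
    + intros [d [H1 H2]]. rewrite sat_ND in H1. apply IHj in H2 as [l [Hl [Hnd Hout]]].
      exists (d :: l). simpl; split; [lia|]. split.
      * constructor; auto. intro Hin. apply (Hout d Hin m); [lia|]. rewrite upd_eq; auto.
      * intros d' [<- | Hd'] i Hi.
        -- specialize (H1 i Hi). rewrite upd_neq, upd_eq in H1 by lia.
           intro E; apply H1; auto.
        -- specialize (Hout d' Hd' i ltac:(lia)). rewrite upd_neq in Hout by lia. auto.
    + intros [l [Hl [Hnd Hout]]]. destruct l as [|d l]; simpl in Hl; [lia|].
      exists d. split.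
      * apply sat_ND. intros k Hk. rewrite upd_neq, upd_eq by lia.
        intro E; apply (Hout d (or_introl eq_refl) k Hk); auto.
      * apply IHj. exists l. split; [lia|]. inversion Hnd; subst. split; auto.
        intros d' Hd' i Hi. destruct (Nat.eq_dec i m).
        -- subst; rewrite upd_eq; intro; subst; contradiction.
        -- rewrite upd_neq by auto; apply Hout; [right; auto | lia].
Qed.

Lemma free_ND {I : Type} t i x : free (@ND I t i) x -> x < i \/ x = t.
Proof.
  induction i; simpl; [tauto|]. intros [H|[H|H]].
  - apply IHi in H; lia.
  - lia.
  - auto.
Qed.

Lemma free_AL {I : Type} j : forall m x, free (@AL I j m) x -> x < m.
Proof.
  induction j; intros m x; simpl; [tauto|]. intros [Hne [H|H]].
  - apply free_ND in H; lia.
  - apply IHj in H; lia.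
Qed.

Lemma sat_sigma {I : Type} (M : structure I) e j :
  sat M e (AL j 0) <-> hasN (carrier M) j.
Proof.
  rewrite sat_AL. split.
  - intros [l [Hl [Hnd _]]]; exists l; auto.
  - intros [l [Hl Hnd]]; exists l; repeat split; auto; intros; lia.
Qed.

Lemma CS_distinct {I : Type} (v : I -> Prop) s1 s2 : s1 < s2 ->
  ~ (forall p, Th (CS s1 v) p <-> Th (CS s2 v) p).
Proof.
  intros Hs H.
  assert (H0 : Th (CS s2 v) (AL (S s2) 0)).
  { split. intros x Hx; apply free_AL in Hx; lia.
    intro e; apply sat_sigma; apply CS_hasN. }
  apply H in H0. destruct H0 as [_ Hsat].
  specialize (Hsat (fun _ => point _)). apply sat_sigma in Hsat.
  destruct Hsat as [l [Hl Hnd]]. apply CS_nohasN in Hnd. lia.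
Qed.

Lemma size_inf {I : Type} (v : I -> Prop) (F : family I) :
  (forall s, F (Th (CS s v))) -> family_infinite F.
Proof.
  intros HF [L HL].
  assert (Hgen : forall (L : list (theory I)) N, exists s, N <= s /\
      forall T', In T' L -> ~ (forall p, Th (CS s v) p <-> T' p)).
  { induction L0 as [|a L0 IH]; intros N.
    - exists N; split; auto; intros _ [].
    - destruct (IH N) as [s1 [Hs1 Hav1]].
      destruct (classic (forall p, Th (CS s1 v) p <-> a p)) as [Heq | Hne].
      + destruct (IH (S s1)) as [s2 [Hs2 Hav2]]. exists s2. split; [lia|].
        intros T' [<- | HT'] Heq2; [| apply (Hav2 T' HT' Heq2)].
        apply (CS_distinct v s1 s2); [lia|]. intro p. rewrite Heq, Heq2. reflexivity.
      + exists s1. split; auto. intros T' [<- | HT']; auto. }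
  destruct (Hgen L 0) as [s [_ Hav]]. destruct (HL _ (HF s)) as [T' [HIn Heq]].
  exact (Hav T' HIn Heq).
Qed.
Unset Implicit Arguments.

Definition vbl {I : Type} (f : I -> nat) (bl : list bool) : I -> Prop :=
  fun i => nth (f i) bl false = true.

Fixpoint all_bl (n : nat) : list (list bool) :=
  match n with
  | 0 => [[]]
  | S n' => map (cons true) (all_bl n') ++ map (cons false) (all_bl n')
  end.

Lemma all_bl_len n : length (all_bl n) = 2 ^ n.
Proof. induction n; simpl; auto. rewrite length_app, !length_map, IHn; lia. Qed.

Lemma all_bl_in n : forall bl, length bl = n -> In bl (all_bl n).
Proof.
  induction n; intros bl Hl; destruct bl as [|b bl]; simpl in *; try lia; auto.
  apply in_or_app; destruct b; [left|right]; apply in_map; apply IHn; lia.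
Qed.

Lemma all_bl_length n : forall bl, In bl (all_bl n) -> length bl = n.
Proof.
  induction n; simpl; intros bl H.
  - destruct H as [<-|[]]; auto.
  - apply in_app_or in H as [H|H]; apply in_map_iff in H as [x [<- Hx]]; simpl;
    rewrite (IHn x Hx); auto.
Qed.

Lemma all_bl_nodup n : NoDup (all_bl n).
Proof.
  induction n; simpl.
  - constructor; [intros []|constructor].
  - apply NoDup_app.
    + apply NoDup_map_on; auto. intros x y _ _ H; injection H; auto.
    + apply NoDup_map_on; auto. intros x y _ _ H; injection H; auto.
    + intros a Ha Hb. apply in_map_iff in Ha as [x [<- _]].
      apply in_map_iff in Hb as [y [Hy _]]. discriminate.
Qed.

Definition code {I : Type} (g : nat -> I) (n : nat) (v : I -> Prop) : list bool :=
  map (fun k => if excluded_middle_informative (v (g k)) then true else false) (seq 0 n).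

Lemma code_len {I : Type} g n (v : I -> Prop) : length (code g n v) = n.
Proof. unfold code; rewrite length_map, length_seq; auto. Qed.

Lemma nth_map_seq {B : Type} (h : nat -> B) n k d : k < n -> nth k (map h (seq 0 n)) d = h k.
Proof.
  intro Hk. rewrite (@nth_indep B _ k d (h 0)) by (rewrite length_map, length_seq; auto).
  rewrite map_nth, seq_nth by auto. reflexivity.
Qed.

Lemma code_nth {I : Type} g n (v : I -> Prop) k : k < n ->
  (nth k (code g n v) false = true <-> v (g k)).
Proof.
  intro Hk. unfold code.
  rewrite nth_map_seq by auto.
  destruct (excluded_middle_informative (v (g k))); split; auto; discriminate.
Qed.

Fixpoint idx {A : Type} (dec : forall x y : A, {x = y} + {x <> y}) (x : A) (l : list A) : nat :=
  match l with [] => 0 | y :: l' => if dec x y then 0 else S (idx dec x l') end.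

Lemma idx_lt {A : Type} dec (x : A) l : In x l -> idx dec x l < length l.
Proof.
  induction l; simpl; [tauto|]. intros H; destruct (dec x a); try lia.
  destruct H as [H|H]; [congruence|]. apply IHl in H; lia.
Qed.

Lemma nth_idx {A : Type} dec (x : A) l d : In x l -> nth (idx dec x l) l d = x.
Proof.
  induction l; simpl; [tauto|]. intros H; destruct (dec x a); auto.
  destruct H as [H|H]; [congruence|]. auto.
Qed.

Lemma idx_nth {A : Type} dec (l : list A) d : NoDup l -> forall k, k < length l ->
  idx dec (nth k l d) l = k.
Proof.
  induction l as [|a l IH]; simpl; intros Hnd k Hk; [lia|].
  inversion Hnd; subst. destruct k.
  - destruct (dec a a); [auto|contradiction].
  - destruct (dec (nth k l d) a) as [E|E].
    + exfalso. apply H1. rewrite <- E. apply nth_In; lia.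
    + rewrite IH; auto; lia.
Qed.

Lemma cover_iso {I : Type} (M : structure I) (l : list (carrier M)) s (v : I -> Prop) :
  NoDup l -> (forall x, In x l) -> length l = S s -> (forall i, interp M i <-> v i) ->
  forall p, Th M p <-> Th (CS s v) p.
Proof.
  intros Hnd Hcov Hlen Hv.
  pose (dec := fun x y : carrier M => excluded_middle_informative (x = y)).
  assert (Hp : forall x, Nat.ltb (idx dec x l) (S s) = true).
  { intro x; apply Nat.ltb_lt; rewrite <- Hlen; apply idx_lt; auto. }
  pose (h := fun x => (exist (fun m => Nat.ltb m (S s) = true) (idx dec x l) (Hp x)
     : carrier (CS s v))).
  pose (hi := fun c : carrier (CS s v) => nth (proj1_sig c) l (point M)).
  apply (Th_iso M (CS s v) h hi).
  - intro x; unfold hi, h; simpl. apply nth_idx; auto.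
  - intro c. apply sig_eq. unfold hi, h; simpl. apply idx_nth; auto.
    destruct c as [m pm]; simpl. apply Nat.ltb_lt in pm; lia.
  - intro i; simpl; apply Hv.
Qed.

Lemma core {I : Type} n (f : I -> nat) (g : nat -> I)
  (Hf : forall i, f i < n) (Hgf : forall i, g (f i) = i) (p : form I) :
  family_infinite (subfamily (T_Sigma I) p) ->
  exists v : I -> Prop, forall M : structure I, (forall i, interp M i <-> v i) ->
    large (carrier M) (length (vars p)) -> forall e, sat M e p.
Proof.
  intros Hinf.
  destruct (classic (exists S0 : structure I, (forall e, sat S0 e p) /\
      hasN (carrier S0) (S (length (vars p))))) as [[S0 [Hs Hh]] | Hno].
  - exists (interp S0). intros M HM Hl e.
    apply (transfer S0 M p); auto.
    + intro i; rewrite HM; tauto.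
    + apply (large_mono (k := S (length (vars p)))); auto. apply hasN_large; auto.
  - exfalso; apply Hinf.
    exists (flat_map (fun s => map (fun bl => Th (CS s (vbl f bl))) (all_bl n))
              (seq 0 (S (length (vars p))))).
    intros T [[S0 ->] [Hc Hs]].
    assert (Hnh : ~ hasN (carrier S0) (S (length (vars p)))) by (intro; apply Hno; eauto).
    destruct (cover _ _ Hnh) as [l [Hnd [Hcov Hlen]]].
    destruct l as [|x0 l']; [destruct (Hcov (point S0))|].
    exists (Th (CS (length l') (vbl f (code g n (interp S0))))). split.
    + apply in_flat_map. exists (length l'). split.
      * apply (proj2 (in_seq _ _ _)). simpl in Hlen; lia.
      * apply (in_map (fun bl => Th (CS (length l') (vbl f bl)))). apply all_bl_in. apply code_len.
    + apply (cover_iso S0 (x0 :: l')); auto.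
      intro i. unfold vbl. rewrite code_nth by auto. rewrite Hgf. tauto.
Qed.

Lemma nat_fresh (l : list nat) : forall x, In x l -> x < S (fold_right Nat.add 0 l).
Proof. induction l; simpl; intros x H; [contradiction|destruct H as [<-|H]; [lia| apply IHl in H; lia]]. Qed.

Lemma nat_large k : large nat k.
Proof.
  intros l _. exists (S (fold_right Nat.add 0 l)). intro H; apply nat_fresh in H; lia.
Qed.

Lemma bound {I : Type} n (f : I -> nat) (g : nat -> I)
  (Hf : forall i, f i < n) (Hgf : forall i, g (f i) = i) k (phi : nat -> form I) :
  (forall i j, i < k -> j < k -> i <> j -> inconsistent (phi i) (phi j)) ->
  (forall i, i < k -> family_infinite (subfamily (T_Sigma I) (phi i))) -> k <= 2 ^ n.
Proof.
  intros Hinc Hinf.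
  assert (Hch : forall i, exists v : I -> Prop, i < k -> forall M : structure I,
     (forall a, interp M a <-> v a) -> large (carrier M) (length (vars (phi i))) ->
     forall e, sat M e (phi i)).
  { intro i. destruct (lt_dec i k) as [Hi|Hi].
    - destruct (core n f g Hf Hgf (phi i) (Hinf i Hi)) as [v Hv]. exists v; auto.
    - exists (fun _ => True); intros; lia. }
  pose (V := fun i => proj1_sig (constructive_indefinite_description _ (Hch i))).
  assert (HV : forall i, i < k -> forall M : structure I,
     (forall a, interp M a <-> V i a) -> large (carrier M) (length (vars (phi i))) ->
     forall e, sat M e (phi i)).
  { intro i; exact (proj2_sig (constructive_indefinite_description _ (Hch i))). }
  rewrite <- (all_bl_len n).
  cut (length (map (fun i => code g n (V i)) (seq 0 k)) <= length (all_bl n)).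
  { rewrite length_map, length_seq; auto. }
  apply NoDup_incl_length.
  - apply NoDup_map_on; [|apply seq_NoDup].
    intros i j Hi Hj Heq. apply in_seq in Hi, Hj.
    destruct (Nat.eq_dec i j) as [|Hne]; auto. exfalso.
    assert (Hvv : forall a, V i a <-> V j a).
    { intro a. rewrite <- (Hgf a). rewrite <- (code_nth g n (V i)), <- (code_nth g n (V j))
        by auto. rewrite Heq; tauto. }
    pose (Mn := {| carrier := nat; point := 0; interp := V i |} : structure I).
    apply (Hinc i j ltac:(lia) ltac:(lia) Hne Mn (fun _ => 0)). split.
    + apply HV; [lia| intro; simpl; tauto | apply nat_large].
    + apply HV; [lia| intro; simpl; apply Hvv | apply nat_large].
  - intros bl Hbl. apply in_map_iff in Hbl as [i [<- _]]. apply all_bl_in, code_len.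
Qed.

Lemma noRS2 {I : Type} n (f : I -> nat) (g : nat -> I)
  (Hf : forall i, f i < n) (Hgf : forall i, g (f i) = i) (F : family I) :
  (forall T, F T -> T_Sigma I T) -> ~ RS_ge (OS Oone) F.
Proof.
  intros HF. unfold Oone; simpl. intros [phi [[Hc Hinc] Hinf]].
  assert (2 ^ n + 1 <= 2 ^ n); [|lia].
  apply (bound n f g Hf Hgf _ phi).
  - intros i j _ _ Hne; apply Hinc; auto.
  - intros i _ [L HL]. apply (Hinf i). exists L. intros T [HT Hp]. apply HL. split; auto.
Qed.
Unset Implicit Arguments.

Definition lit {I : Type} (a : I) (b : bool) : form I :=
  if b then FPred a else FNot (FPred a).
Fixpoint psi {I : Type} (g : nat -> I) (bl : list bool) (k : nat) : form I :=
  match bl with [] => FNot FFalse | b :: bl' => FAnd (lit (g k) b) (psi g bl' (S k)) end.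

Lemma sat_psi {I : Type} (M : structure I) e g bl : forall k,
  sat M e (psi g bl k) <->
  forall j, j < length bl -> (interp M (g (k + j)) <-> nth j bl false = true).
Proof.
  induction bl as [|b bl IH]; intros k; simpl.
  - split; intros; [lia|tauto].
  - rewrite IH. split.
    + intros [Hl Hr] j Hj. destruct j.
      * rewrite Nat.add_0_r. destruct b; simpl in *; split; intros; auto; try discriminate; tauto.
      * rewrite Nat.add_succ_r. apply (Hr j); lia.
    + intros H. split.
      * specialize (H 0 ltac:(lia)). rewrite Nat.add_0_r in H.
        destruct b; simpl in *; [apply H; auto | intro Hi; apply H in Hi; discriminate].
      * intros j Hj. replace (S k + j) with (k + S j) by lia. apply (H (S j)); lia.
Qed.

Lemma closed_psi {I : Type} (g : nat -> I) bl : forall k, closed (psi g bl k).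
Proof.
  induction bl as [|b bl IH]; intros k x; simpl; [tauto|].
  destruct b; simpl; intros [H|H]; auto; apply (IH (S k) x H).
Qed.

Lemma part1 (I : Type) n : has_card I n ->
  RS_eq (T_Sigma I) Oone /\ ds_eq (T_Sigma I) Oone (2 ^ n).
Proof.
  intros [f [g [Hf [Hgf Hfg]]]].
  assert (Hsub : forall bl, length bl = n ->
     RS_eq (subfamily (T_Sigma I) (psi g bl 0)) Oone).
  { intros bl Hbl. split.
    - unfold Oone; simpl. apply (size_inf (vbl f bl)). intro s. split.
      + exists (CS s (vbl f bl)); auto.
      + split; [apply closed_psi|]. intro e. apply sat_psi. intros j Hj. simpl.
        unfold vbl. rewrite Hfg by lia. tauto.
    - apply (noRS2 n f g Hf Hgf). intros T [HT _]; auto. }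
  split.
  - split.
    + unfold Oone; simpl. apply (size_inf (fun _ => False)). intro s. exists (CS s (fun _ => False)); auto.
    + apply (noRS2 n f g Hf Hgf); auto.
  - split.
    + exists (fun i => psi g (nth i (all_bl n) []) 0). split.
      * split; [intros; apply closed_psi|].
        intros i j Hi Hj Hne M e [H1 H2].
        rewrite sat_psi in H1, H2.
        apply Hne. apply (proj1 (NoDup_nth (all_bl n) []) (all_bl_nodup n));
          rewrite ?all_bl_len; auto.
        assert (Li : length (nth i (all_bl n) []) = n)
          by (apply all_bl_length, nth_In; rewrite all_bl_len; auto).
        assert (Lj : length (nth j (all_bl n) []) = n)
          by (apply all_bl_length, nth_In; rewrite all_bl_len; auto).
        apply (nth_ext _ _ false false); [congruence|].
        intros m Hm. specialize (H1 m Hm). rewrite Li in Hm. rewrite <- Lj in Hm.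
        specialize (H2 m Hm). simpl in H1, H2.
        destruct (nth m (nth i (all_bl n) []) false), (nth m (nth j (all_bl n) []) false);
          try reflexivity; exfalso;
          first [discriminate (proj1 H2 (proj2 H1 eq_refl)) | discriminate (proj1 H1 (proj2 H2 eq_refl))].
      * intros i Hi. apply Hsub. apply all_bl_length, nth_In. rewrite all_bl_len; auto.
    + intros k phi [Hc Hinc] HRS.
      apply (bound n f g Hf Hgf k phi); auto.
      intros i Hi. destruct (HRS i Hi) as [H _]. unfold Oone in H; simpl in H; exact H.
Qed.
Unset Implicit Arguments.

Definition coinf {I : Type} (A : I -> Prop) := forall l : list I, exists i, ~ In i l /\ ~ A i.
Definition GF {I : Type} (F : family I) := exists (A w : I -> Prop), coinf A /\
  forall T, F T <-> exists S, T = Th S /\ forall i, A i -> (interp S i <-> w i).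

Fixpoint sq {I : Type} (fr : list I -> I) (k : nat) : list I :=
  match k with 0 => [] | S k' => fr (sq fr k') :: sq fr k' end.

Fixpoint allP {I : Type} (a : nat -> I) (k : nat) : form I :=
  match k with 0 => FNot FFalse | S k' => FAnd (allP a k') (FPred (a k')) end.

Lemma sat_allP {I : Type} (M : structure I) e a k :
  sat M e (allP a k) <-> forall j, j < k -> interp M (a j).
Proof.
  induction k; simpl.
  - split; intros; [lia|tauto].
  - rewrite IHk. split.
    + intros [H1 H2] j Hj. destruct (Nat.eq_dec j k); [subst; auto | apply H1; lia].
    + intros H; split; [intros; apply H; lia | apply H; lia].
Qed.

Lemma closed_allP {I : Type} (a : nat -> I) k : closed (allP a k).
Proof. induction k; intros x; simpl; [tauto|]. intros [H|H]; [apply (IHk x H)|auto]. Qed.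

Lemma GF_split {I : Type} (F : family I) : GF F ->
  exists phi : nat -> form I, pw_inconsistent phi /\ forall n, GF (subfamily F (phi n)).
Proof.
  intros [A [w [Hco HF]]].
  pose (fr := fun l => proj1_sig (constructive_indefinite_description _ (Hco l))).
  assert (Hfr : forall l, ~ In (fr l) l /\ ~ A (fr l)).
  { intro l; exact (proj2_sig (constructive_indefinite_description _ (Hco l))). }
  pose (a := fun k => fr (sq fr k)).
  assert (HnA : forall k, ~ A (a k)) by (intro k; apply Hfr).
  assert (Hin : forall k m, k < m -> In (a k) (sq fr m)).
  { intros k m; induction m; intros Hkm; [lia|]. simpl.
    destruct (Nat.eq_dec k m); [left; subst; auto | right; apply IHm; lia]. }
  assert (Hdist : forall k m, k < m -> a k <> a m).
  { intros k m Hkm E. apply (proj1 (Hfr (sq fr m))). fold (a m). rewrite <- E; auto. }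
  exists (fun n => FAnd (allP a n) (FNot (FPred (a n)))). split.
  - split.
    + intros n x; simpl. intros [H|H]; [apply (closed_allP a n x H)|auto].
    + intros n m Hnm M e [H1 H2]. simpl in H1, H2.
      rewrite sat_allP in H1, H2. destruct H1 as [H1 H1'], H2 as [H2 H2'].
      destruct (Nat.lt_gt_cases n m) as [[Hlt|Hlt] _]; [auto|..].
      * apply H1'. apply H2; auto.
      * apply H2'. apply H1; auto.
  - intro n.
    pose (w' := fun i => (A i /\ w i) \/ exists j, j < n /\ i = a j).
    assert (WA : forall i, A i -> (w' i <-> w i)).
    { intros i Hi; unfold w'; split; [intros [[_ H]|[j [_ ->]]]; auto; exfalso; apply (HnA j); auto
                                     | intros; left; auto]. }
    assert (Wl : forall j, j < n -> w' (a j)) by (intros j Hj; right; exists j; auto).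
    assert (Wn : ~ w' (a n)).
    { intros [[H _]|[j [Hj E]]]; [apply (HnA n); auto|]. apply (Hdist j n Hj); auto. }
    exists (fun i => A i \/ exists j, j <= n /\ i = a j), w'. split.
    + intro l. destruct (Hco (l ++ sq fr (S n))) as [i [Hi HAi]].
      exists i. split.
      * intro; apply Hi; apply in_or_app; auto.
      * intros [H|[j [Hj ->]]]; [auto|]. apply Hi; apply in_or_app; right; apply Hin; lia.
    + intro T. unfold subfamily. split.
      * intros [HT Hp]. apply HF in HT as [S0 [-> HS]]. exists S0. split; auto.
        destruct Hp as [_ Hp]. specialize (Hp (fun _ => point S0)). simpl in Hp.
        rewrite sat_allP in Hp. destruct Hp as [Hp Hp'].
        intros i [HAi | [j [Hj ->]]].
        -- rewrite WA by auto; apply HS; auto.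
        -- destruct (Nat.eq_dec j n) as [->|Hjn].
           ++ split; intro; exfalso; [apply Hp'; auto | apply Wn; auto].
           ++ split; intro; [apply Wl; lia | apply Hp; lia].
      * intros [S0 [-> HS]]. split.
        -- apply HF. exists S0. split; auto. intros i Hi. rewrite <- WA by auto.
           apply HS; auto.
        -- split.
           ++ intros x; simpl. intros [H|H]; [apply (closed_allP a n x H)|auto].
           ++ intro e. simpl. rewrite sat_allP. split.
              ** intros j Hj. apply HS; [right; exists j; split; [lia|auto] | apply Wl; auto].
              ** intro H. apply Wn. apply HS; auto. right; exists n; auto.
Qed.

Lemma GF_RS {I : Type} (a : Ord) : forall F : family I, GF F -> RS_ge a F.
Proof.
  induction a as [|a IH|A x f IH]; intros F HG.
  - destruct HG as [A [w [_ HF]]]. simpl.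
    exists (Th {| carrier := unit; point := tt; interp := w |}).
    apply HF. exists {| carrier := unit; point := tt; interp := w |}. split; auto.
    simpl; tauto.
  - destruct a.
    + simpl. destruct HG as [A [w [_ HF]]]. apply (size_inf w). intro s.
      apply HF. exists (CS s w); split; auto. simpl; tauto.
    + simpl. destruct (GF_split F HG) as [phi [Hpw HG']]. exists phi; split; auto. intro m; apply IH; auto.
    + simpl. destruct (GF_split F HG) as [phi [Hpw HG']]. exists phi; split; auto. intro m; apply IH; auto.
  - simpl. intro y. apply IH; auto.
Qed.

Lemma part2 (I : Type) : ~ type_finite I -> RS_infty (T_Sigma I).
Proof.
  intros Hnf a. apply GF_RS.
  exists (fun _ => False), (fun _ => False). split.
  - intro l. apply NNPP; intro H. apply Hnf. exists l. intro i.
    apply NNPP; intro Hi. apply H. exists i; auto.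
  - intro T; split.
    + intros [S0 ->]. exists S0; split; auto; intros _ [].
    + intros [S0 [-> _]]. exists S0; auto.
Qed.

Theorem proposition2p2 :
  forall I : Type,
    (forall n : nat, has_card I n ->
       RS_eq (T_Sigma I) Oone /\ ds_eq (T_Sigma I) Oone (2 ^ n)) /\
    (~ type_finite I -> RS_infty (T_Sigma I)).
Proof.
  intro I. split.
  - intros n H; apply part1; auto.
  - apply part2.
Qed.
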